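(* For every $e\in\mathtt{CA}$ and all $c,d\in\mathtt{CA}$, \[\delta(e\circ c,e\circ d)\le(2r(e)+1)\,\delta(c,d).\] In particular, $c\mapsto e\circ c$ is Lipschitz continuous on $(\mathtt{CA},\delta)$.
   Context: $\Sigma$ is a finite alphabet with $|\Sigma|\ge2$. For $r\in\mathbb{N}$, $N(r)=[-r,r]$. A cellular automaton (CA) is a map $c:\Sigma^\mathbb{Z}\to\Sigma^\mathbb{Z}$ of the form $c(x)_i=F(x_{[i-r,i+r]})$ for some local function $F:\Sigma^{N(r)}\to\Sigma$; any such $r$ is a radius and $r(c)$ denotes the minimal radius. $\mathtt{CA}$ is the set of all CA. For $c,d\in\mathtt{CA}$ with common radius $r$, $D^c_d=\{w\in\Sigma^{N(r)}\mid$ the local rules of $c$ and $d$ give different outputs on $w\}$ (equivalently, $c(x)_0\neq d(x)_0$ for $x_{[-r,r]}=w$), and $\delta(c,d)=|D^c_d|/|\Sigma|^{2r+1}$, independent of $r$. *)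

(* Defs.v *)
From HB Require Import structures.
From mathcomp Require Import all_boot all_order all_algebra.
Set Implicit Arguments. Unset Strict Implicit. Unset Printing Implicit Defensive.
Import Order.TTheory GRing.Theory Num.Theory.
Local Open Scope ring_scope.

Definition config (S : finType) := int -> S.

(* Local patterns on N(r) = [-r,r], indexed by 'I_(2r+1): index k <-> position k - r. *)
Definition pattern (S : finType) (r : nat) := {ffun 'I_(r.*2.+1) -> S}.

Definition window (S : finType) (r : nat) (x : config S) (i : int) : pattern S r :=
  [ffun k : 'I_(r.*2.+1) => x (i - r%:Z + (k : nat)%:Z)].

Definition is_radius (S : finType) (c : config S -> config S) (r : nat) : Prop :=
  exists F : pattern S r -> S, forall (x : config S) (i : int), c x i = F (window r x i).

Definition is_CA (S : finType) (c : config S -> config S) : Prop :=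
  exists r, is_radius c r.

(* A configuration x with x_[-r,r] = w (positions outside N(r) filled with w at -r). *)
Definition extend (S : finType) (r : nat) (w : pattern S r) : config S :=
  fun j => w (inord `|(j + r%:Z)%R|%N).

Definition Dset (S : finType) (r : nat) (c d : config S -> config S) : {set pattern S r} :=
  [set w : pattern S r | c (extend w) 0 != d (extend w) 0].

(* delta(c,d) computed at common radius r: |D^c_d| / |Sigma|^(2r+1). *)
Definition delta_at (S : finType) (r : nat) (c d : config S -> config S) : rat :=
  (#|Dset r c d|)%:R / ((#|S| ^ r.*2.+1)%N)%:R.

(* Main.v *)
Require Import Defs.
From HB Require Import structures.
From mathcomp Require Import all_boot all_order all_algebra.
From mathcomp Require Import zify ring.
Import Order.TTheory GRing.Theory Num.Theory.

Definition subw (S : finType) (n m t : nat) (w : {ffun 'I_n.+1 -> S}) : {ffun 'I_m.+1 -> S} :=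
  [ffun j : 'I_m.+1 => w (inord (t + j))].

Arguments subw {S n m} t w.

Lemma card_fiber (S : finType) (n m t : nat) (h : t + m <= n) (a : {ffun 'I_m.+1 -> S}) :
  #|[pred w : {ffun 'I_n.+1 -> S} | subw t w == a]| = #|S| ^ (n - m).
Proof.
pose F := fun i : 'I_n.+1 => if (t <= i < t + m.+1) then pred1 (a (inord (i - t))) else predT.
have -> : #|[pred w : {ffun 'I_n.+1 -> S} | subw t w == a]| = #|family F|.
  apply: eq_card => w; rewrite !inE; apply/eqP/familyP.
  - move=> hw i; subst a; rewrite /F.
    case: ifP => [/andP[h1 h2]|_]; last by rewrite inE.
    rewrite inE /= ffunE inordK; last by have := ltn_ord i; lia.
    by rewrite subnKC // inord_val.
  - move=> hw; apply/ffunP => j; rewrite ffunE.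
    have := hw (inord (t + j)); rewrite /F inordK; last by have := ltn_ord j; lia.
    have hj := ltn_ord j.
    rewrite ifT; last by lia.
    by rewrite /= addKn inord_val => /eqP.
rewrite card_family foldrE big_map big_enum /=.
rewrite (eq_bigr (fun i : 'I_n.+1 => if t <= i < t + m.+1 then 1 else #|S|)); last first.
  move=> i _; rewrite /F; case: ifP => _; first by rewrite card1.
  by apply: eq_card => x; rewrite !inE.
rewrite -(big_mkord xpredT (fun i => if t <= i < t + m.+1 then 1 else #|S|)).
rewrite (big_cat_nat _ (n := t)) //=; last by lia.
rewrite (big_cat_nat _ (m := t) (n := t + m.+1)) //=; last by lia.
rewrite (eq_big_nat _ _ (F2 := fun _ => #|S|)); last by move=> i hi; rewrite ifF //; lia.
rewrite [X in _ * (_ * X)](eq_big_nat _ _ (F2 := fun _ => #|S|)); last by move=> i hi; rewrite ifF //; lia.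
rewrite [X in _ * (X * _)](eq_big_nat _ _ (F2 := fun _ => 1)); last by move=> i hi; rewrite ifT //; lia.
rewrite !prod_nat_const_nat exp1n mul1n -expnD; congr (_ ^ _); lia.
by lia.
Qed.


Lemma card_pre (S : finType) (n m t : nat) (h : t + m <= n) (A : {set {ffun 'I_m.+1 -> S}}) :
  #|[set w : {ffun 'I_n.+1 -> S} | subw t w \in A]| = #|A| * #|S| ^ (n - m).
Proof.
rewrite -sum1_card (partition_big (subw t) (mem A)) /=; last by move=> w; rewrite inE.
rewrite -sum_nat_const; apply: eq_bigr => a aA.
rewrite -(@card_fiber S n m t h a) -sum1_card; apply: eq_bigl => w; rewrite !inE.
by case: (subw t w =P a) => [->|]; rewrite ?aA ?andbF.
Qed.

Lemma win_ext (S : finType) (R r t : nat) (i : int) (w : pattern S R) :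
  (i + R%:Z = (t + r)%:Z)%R -> window r (extend w) i = subw t w.
Proof.
move=> hi; apply/ffunP => j; rewrite !ffunE /extend.
have -> : (i - r%:Z + (j : nat)%:Z + R%:Z = (t + j)%:Z)%R by lia.
by [].
Qed.

Lemma win_ext0 (S : finType) (r : nat) (w : pattern S r) : window r (extend w) 0 = w.
Proof.
rewrite (@win_ext S r r 0 0 w); last by lia.
by apply/ffunP => j; rewrite ffunE add0n inord_val.
Qed.

Lemma Dset_rule (S : finType) (r : nat) (c d : config S -> config S) Fc Fd :
  (forall x i, c x i = Fc (window r x i)) -> (forall x i, d x i = Fd (window r x i)) ->
  forall w, (w \in Dset r c d) = (Fc w != Fd w).
Proof. by move=> hc hd w; rewrite inE hc hd win_ext0. Qed.

Arguments Dset_rule {S r c d Fc Fd}.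

Local Open Scope ring_scope.

Theorem lemma4p1 (S : finType) (hS : (1 < #|S|)%N)
  (e c d : config S -> config S)
  (re : nat) (hre : is_radius e re) (hmin : forall r, is_radius e r -> (re <= r)%N)
  (r1 : nat) (hc : is_radius c r1) (hd : is_radius d r1)
  (r2 : nat) (hec : is_radius (e \o c) r2) (hed : is_radius (e \o d) r2) :
  delta_at r2 (e \o c) (e \o d) <= (re.*2.+1)%:R * delta_at r1 c d.
Proof.
move: hc hd hec hed hre => [Fc hFc] [Fd hFd] [Gc hGc] [Gd hGd] [Fe hFe].
set R := (r2 + r1 + re)%N.
set D1 := Dset r1 c d; set D2 := Dset r2 (e \o c) (e \o d).
set B := [set w : pattern S R | subw (r1 + re) w \in D2].
have hB : #|B| = (#|D2| * #|S| ^ (R.*2 - r2.*2))%N by rewrite /B card_pre //; lia.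
have hP : forall j : 'I_re.*2.+1,
    #|[set w : pattern S R | subw (r2 + j) w \in D1]| = (#|D1| * #|S| ^ (R.*2 - r1.*2))%N.
  by move=> j; rewrite card_pre //; have := ltn_ord j; lia.
have key : (#|B| <= re.*2.+1 * (#|D1| * #|S| ^ (R.*2 - r1.*2)))%N.
  have -> : (re.*2.+1 * (#|D1| * #|S| ^ (R.*2 - r1.*2)))%N =
     (\sum_(j < re.*2.+1) #|[set w : pattern S R | subw (r2 + j) w \in D1]|)%N.
    by rewrite (eq_bigr _ (fun j _ => hP j)) sum_nat_const card_ord.
  rewrite -sum1_card.
  apply: (@leq_trans (\sum_(w in B) \sum_(j < re.*2.+1)
                        (subw (r2 + j) w \in D1 : nat))%N).
    apply: leq_sum => w; rewrite inE => wB.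
    have [j hj] : exists j : 'I_re.*2.+1, subw (r2 + j) w \in D1.
      set x := extend w.
      move: wB; rewrite (Dset_rule hGc hGd) /= => hne.
      have hne' : window re (c x) 0 != window re (d x) 0.
        apply: contra hne => /eqP heq.
        rewrite -(@win_ext S R r2 (r1 + re) 0 w) ?hGc ?hGd; last by lia.
        by rewrite -hGc -hGd /= !hFe heq.
      have [j hj] : exists j, window re (c x) 0 j != window re (d x) 0 j.
        apply/existsP; move: hne'; apply: contraR; rewrite negb_exists => /forallP hall.
        by apply/eqP/ffunP => j; apply/eqP; move/negPn: (hall j).
      exists j; move: hj; rewrite !ffunE hFc hFd.
      rewrite (Dset_rule hFc hFd).
      by rewrite (@win_ext S R r1 (r2 + j) _ w) //; lia.
    by rewrite (bigD1 j) //= hj leq_addr.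
  rewrite exchange_big /=; apply: leq_sum => j _.
  rewrite -sum1_card big_mkcond [X in (_ <= X)%N]big_mkcond /=.
  apply: leq_sum => w _; rewrite [X in (_ <= if X then _ else _)%N]inE.
  by case: (w \in B); case: (_ \in D1).
rewrite hB in key.
rewrite /delta_at -/D1 -/D2.
set s := #|S|.
have nz : forall k, (s ^ k)%:R != 0 :> rat.
  by move=> k; rewrite pnatr_eq0 expn_eq0 negb_and; apply/orP; left; apply/eqP; lia.
have he2 : (s ^ (R.*2 - r2.*2) * s ^ r2.*2.+1 = s ^ R.*2.+1)%N.
  by rewrite -expnD; f_equal; lia.
have he1 : (s ^ (R.*2 - r1.*2) * s ^ r1.*2.+1 = s ^ R.*2.+1)%N.
  by rewrite -expnD; f_equal; lia.
have hpos : 0 < (s ^ R.*2.+1)%:R :> rat by rewrite ltr0n expn_gt0; apply/orP; left; lia.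
rewrite -(ler_pM2r hpos).
rewrite -[in X in X <= _]he2 -[in X in _ <= X]he1 !natrM.
have -> : (#|D2|%:R / (s ^ r2.*2.+1)%:R * ((s ^ (R.*2 - r2.*2))%:R * (s ^ r2.*2.+1)%:R) : rat)
   = (#|D2| * s ^ (R.*2 - r2.*2))%N%:R.
  by rewrite natrM; field; apply: nz.
have -> : ((re.*2.+1)%:R * (#|D1|%:R / (s ^ r1.*2.+1)%:R) * ((s ^ (R.*2 - r1.*2))%:R * (s ^ r1.*2.+1)%:R) : rat)
   = (re.*2.+1 * (#|D1| * s ^ (R.*2 - r1.*2)))%N%:R.
  by rewrite !natrM; field; apply: nz.
by rewrite ler_nat.
Qed.
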